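(* Let $s'\in\mathbb C$ and $f\in C_c^{\mathrm{lc}}(S\mathfrak X)$, regarded as a function on $G/M$ via $gM\mapsto f(go,g\omega_+)$. Then for every $n\in\mathbb N_0$ and $g\in G$, $$\mathcal I_{s',n}(f)(g)=\sum_{\substack{x\in H_{\omega_+}(o)\\ d(x,o)\le 2n}}f(gx,g\omega_+)\,q^{-d(x,o)(\frac12-i\overline{s'})}.$$ In particular $\mathcal I_{s',0}(f)=f$.
   Context: Let $q\ge2$, $\mathfrak G$ the $(q+1)$-regular tree with vertex set $\mathfrak X$, graph distance $d$ and boundary $\Omega$ (infinite non-backtracking edge chains modulo eventual equality up to shift); $[x,\omega)$ is the ray from $x$ to $\omega$. Fix a vertex $o$ and $\omega_-\ne\omega_+$ with $o$ on the geodesic $]\omega_-,\omega_+[$; $\langle x,\omega\rangle=d(o,y)-d(x,y)$ where $[o,\omega)\cap[x,\omega)=[y,\omega)$. $H_{\omega_+}(o)=\{x\in\mathfrak X:\langle x,\omega_+\rangle=0\}$. $S\mathfrak X=\mathfrak X\times\Omega$, $C_c^{\mathrm{lc}}(S\mathfrak X)$ its locally constant compactly supported functions. $G=\mathrm{Aut}(\mathfrak G)$, $K=\mathrm{Stab}_G(o)$, $M=\{\gamma\in K:\gamma$ fixes $]\omega_-,\omega_+[$ pointwise$\}$, $B_{\omega_+}=\{g\in G:g\omega_+=\omega_+,\ g\text{ fixes some vertex}\}$, a unimodular locally compact group whose Haar measure $du$ is normalized so that $B_{\omega_+}\cap\mathrm{Stab}_G(x)$ has measure $q^{\langle x,\omega_+\rangle}$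 for each $x\in\mathfrak X$. For $n\in\mathbb N_0$ let $x_n$ be the vertex of $[o,\omega_+)$ with $d(o,x_n)=n$ and $B_{\omega_+,n}=B_{\omega_+}\cap\mathrm{Stab}_G(x_n)$. For functions $F$ on $G/M$, $\mathcal I_{s',n}(F)(gM)=\int_{B_{\omega_+,n}}F(guM)\,q^{\langle uo,\omega_-\rangle(\frac12-i\overline{s'})}\,du$. *)

(* Defs.v *)
From HB Require Import structures.
From Stdlib Require ClassicalEpsilon.
From mathcomp Require Import all_boot all_algebra.
From mathcomp Require Import all_classical all_reals all_analysis.
From mathcomp Require Import complex.

Set Implicit Arguments.
Unset Strict Implicit.
Unset Printing Implicit Defensive.

Import GRing.Theory Num.Theory.
Local Open Scope classical_set_scope.
Local Open Scope ring_scope.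

Section Tree.
Variables (X : choiceType) (adj : X -> X -> Prop).

Fixpoint walk (x : X) (p : seq X) : Prop :=
  match p with [::] => True | y :: p' => adj x y /\ walk y p' end.

Fixpoint nbt (a b : X) (p : seq X) : Prop :=
  match p with [::] => True | c :: p' => a <> c /\ nbt b c p' end.

(* x :: p has no backtracking a, b, a *)
Definition nonbacktracking (x : X) (p : seq X) : Prop :=
  match p with [::] => True | y :: p' => nbt x y p' end.

Definition is_regular_tree (q : nat) : Prop :=
  (forall x y, adj x y -> adj y x) /\
  (forall x, ~ adj x x) /\
  (forall x, exists nb : 'I_q.+1 -> X,
      injective nb /\ forall y, adj x y <-> exists i, nb i = y) /\
  (forall x y, exists p, walk x p /\ last x p = y) /\
  (forall x p, walk x p -> nonbacktracking x p -> last x p = x -> p = [::]).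

Definition walkn (n : nat) (x y : X) : Prop :=
  exists p, walk x p /\ last x p = y /\ size p = n.

Lemma walkn_ex_bool (x y : X) :
  (exists n, walkn n x y) -> exists n, `[< walkn n x y >].
Proof. by case=> n h; exists n; apply/asboolP. Qed.

Definition dist (x y : X) : nat :=
  match pselect (exists n, walkn n x y) with
  | left h => ex_minn (walkn_ex_bool h)
  | right _ => 0%N
  end.

Definition ray (r : nat -> X) : Prop :=
  forall n, adj (r n) (r n.+1) /\ r n <> r n.+2.

(* equality of boundary points: eventual equality up to shift *)
Definition ends_eq (r r' : nat -> X) : Prop :=
  exists k m, forall j, r (j + k)%N = r' (j + m)%N.

Definition ray_to (x : X) (w r : nat -> X) : Prop :=
  ray r /\ r 0%N = x /\ ends_eq r w.

Definition on_ray (r : nat -> X) (v : X) : Prop := exists n, r n = v.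

Definition confluence (o x : X) (w : nat -> X) : X :=
  ClassicalEpsilon.epsilon (inhabits o) (fun y =>
    exists ro rx ry, ray_to o w ro /\ ray_to x w rx /\ ray_to y w ry /\
      forall v, (on_ray ro v /\ on_ray rx v) <-> on_ray ry v).

Definition horo (o x : X) (w : nat -> X) : int :=
  (dist o (confluence o x w))%:Z - (dist x (confluence o x w))%:Z.

Definition xpt (o : X) (w : nat -> X) (n : nat) : X :=
  ClassicalEpsilon.epsilon (inhabits o) (fun v =>
    exists r, ray_to o w r /\ on_ray r v /\ dist o v = n).

Definition is_aut (g : X -> X) : Prop :=
  bijective g /\ forall x y, adj x y <-> adj (g x) (g y).

Definition Bw (w : nat -> X) : set (X -> X) :=
  [set u | is_aut u /\ ends_eq (u \o w) w /\ exists x, u x = x].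

Definition Bwn (o : X) (w : nat -> X) (n : nat) : set (X -> X) :=
  [set u | Bw w u /\ u (xpt o w n) = xpt o w n].

(* locally constant, compactly supported functions on X x Omega, given
   on representatives (rays) and invariant under equality of ends;
   the topology on Omega (based at x) has the cones
   {w' : [x,w') passes through the N-th vertex of [x,w)} as a basis. *)
Definition lc_compact (R : realType) (f : X -> (nat -> X) -> R[i]) : Prop :=
  (forall x r r', ray r -> ray r' -> ends_eq r r' -> f x r = f x r') /\
  (exists S : seq X, forall x r, ray r -> x \notin S -> f x r = 0) /\
  (forall x r, ray r -> exists N : nat, forall r', ray r' ->
      (exists rx rx', ray_to x r rx /\ ray_to x r' rx' /\ rx N = rx' N) ->
      f x r' = f x r).

End Tree.

(* Measurable structure on automorphisms: X -> X with the sigma-algebra *)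
(* generated by the cylinders {u | u x = y}, i.e. the Borel sets of the *)
(* topology of pointwise convergence (X is discrete and countable).     *)
Definition autfun (X : Type) := X -> X.
HB.instance Definition _ (X : choiceType) :=
  Choice.copy (autfun X) (X -> X).
HB.instance Definition _ (X : choiceType) :=
  isPointed.Build (autfun X) (fun x => x).

Definition cylinders (X : choiceType) : set (set (autfun X)) :=
  [set A | exists x y : X, A = [set u | u x = y]].

Definition AutM (X : choiceType) := g_sigma_algebraType (@cylinders X).

Local Open Scope complex_scope.

Definition cpow (R : realType) (b : R) (z : R[i]) : R[i] :=
  (expR (complex.Re z * ln b) * cos (complex.Im z * ln b)) +i*
  (expR (complex.Re z * ln b) * sin (complex.Im z * ln b)).

Definition cintegral (R : realType) (X : choiceType)
    (mu : {measure set (AutM X) -> \bar R}) (D : set (AutM X))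
    (F : AutM X -> R[i]) : R[i] :=
  Rintegral mu D (fun u => complex.Re (F u)) +i*
  Rintegral mu D (fun u => complex.Im (F u)).

Definition haar_normalized (R : realType) (X : choiceType)
    (adj : X -> X -> Prop) (q : nat) (o : X) (wp : nat -> X)
    (mu : {measure set (AutM X) -> \bar R}) : Prop :=
  (forall g : X -> X, Bw adj wp g ->
     forall A : set (AutM X), measurable A -> A `<=` Bw adj wp ->
       mu [set (g \o (u : X -> X)) | u in A] = mu A) /\
  (forall x : X,
     mu [set u : AutM X | Bw adj wp u /\ u x = x] =
     ((q%:R : R) ^ horo adj o x wp)%:E).

Definition expo (R : realType) (s' : R[i]) : R[i] :=
  (2^-1 : R)%:C - 'i * s'^*.

(* I_{s',n}(F)(g) = \int_{B_{w+,n}} F(g u M) q^{<uo, w->(1/2 - i conj s')} du,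
   for F a function on G/M, i.e. on automorphisms (right M-invariant). *)
Definition Isn (R : realType) (X : choiceType) (adj : X -> X -> Prop)
    (mu : {measure set (AutM X) -> \bar R}) (q : nat) (o : X)
    (wm wp : nat -> X) (s' : R[i]) (n : nat)
    (F : (X -> X) -> R[i]) (g : X -> X) : R[i] :=
  cintegral mu (Bwn adj o wp n) (fun u : AutM X =>
    F (g \o (u : X -> X)) *
    cpow (q%:R : R) (((horo adj o (u o) wm)%:~R : R)%:C * expo s')).

Definition onGM (R : realType) (X : choiceType) (o : X) (wp : nat -> X)
    (f : X -> (nat -> X) -> R[i]) (g : X -> X) : R[i] :=
  f (g o) (g \o wp).

(* Main.v *)
Require Import Defs.
From HB Require Import structures.
From mathcomp Require Import all_boot all_algebra.
From mathcomp Require Import all_classical all_reals all_analysis.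
From mathcomp Require Import complex.
From mathcomp Require Import lebesgue_measure measurable_realfun.
From mathcomp Require Import zify.
From mathcomp Require finmap.

Module Part1.
Set Implicit Arguments.
Unset Strict Implicit.
Unset Printing Implicit Defensive.

Section Walks.
Variables (X : choiceType) (adj : X -> X -> Prop).
Hypothesis adj_sym : forall x y, adj x y -> adj y x.
Hypothesis acyc : forall x p, walk adj x p -> nonbacktracking x p -> last x p = x -> p = [::].

Definition FW (f : nat -> X) n := forall i, (i < n)%N -> adj (f i) (f i.+1).
Definition NB (f : nat -> X) n := forall i, (i.+2 <= n)%N -> f i <> f i.+2.

Definition wseq (f : nat -> X) n := mkseq (fun i => f i.+1) n.

Lemma wseqS f n : wseq f n.+1 = f 1%N :: wseq (fun i => f i.+1) n.
Proof.
rewrite /wseq /mkseq /= -[in LHS](addn0 1) iotaDl -map_comp; congr (_ :: _).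
Qed.

Lemma wseq_walk f n : FW f n -> walk adj (f 0%N) (wseq f n).
Proof.
elim: n f => [|n IH] f hf //.
rewrite wseqS /=; split; first exact: hf.
apply: (IH (fun i => f i.+1)) => i hi; apply: hf; lia.
Qed.

Lemma wseq_last f n : last (f 0%N) (wseq f n) = f n.
Proof. by elim: n f => [|n IH] f //; rewrite wseqS /= (IH (fun i => f i.+1)). Qed.

Lemma wseq_size f n : size (wseq f n) = n.
Proof. by rewrite size_mkseq. Qed.

Lemma wseq_nbt f n : NB f n.+1 -> nbt (f 0%N) (f 1%N) (wseq (fun i => f i.+1) n).
Proof.
elim: n f => [|n IH] f hf //.
rewrite wseqS /=; split; first by apply: hf; lia.
apply: (IH (fun i => f i.+1)) => i hi; apply: hf; lia.
Qed.

Lemma wseq_nb f n : NB f n -> nonbacktracking (f 0%N) (wseq f n).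
Proof.
case: n => [|n] hf; first by []. rewrite wseqS /=; exact: wseq_nbt.
Qed.

Lemma cycle_nb f n : FW f n -> NB f n -> f n = f 0%N -> n = 0%N.
Proof.
move=> h1 h2 h3.
have := acyc (wseq_walk h1) (wseq_nb h2); rewrite wseq_last => /(_ h3).
by move/(congr1 size); rewrite wseq_size.
Qed.

Lemma FW_shift f n k : FW f (k + n) -> FW (fun i => f (k + i)%N) n.
Proof. move=> h i hi; rewrite addnS; apply: h; lia. Qed.
Lemma NB_shift f n k : NB f (k + n) -> NB (fun i => f (k + i)%N) n.
Proof. move=> h i hi; rewrite !addnS; apply: h; lia. Qed.
Lemma FW_le f n m : (m <= n)%N -> FW f n -> FW f m.
Proof. move=> hm h i hi; apply: h; lia. Qed.
Lemma NB_le f n m : (m <= n)%N -> NB f n -> NB f m.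
Proof. move=> hm h i hi; apply: h; lia. Qed.

Lemma FW_rev f n : FW f n -> FW (fun i => f (n - i)%N) n.
Proof.
move=> h i hi; apply: adj_sym; have -> : (n - i = (n - i.+1).+1)%N by lia.
apply: h; lia.
Qed.
Lemma NB_rev f n : NB f n -> NB (fun i => f (n - i)%N) n.
Proof.
move=> h i hi; have -> : (n - i = (n - i.+2).+2)%N by lia.
move=> e; apply: (h (n - i.+2)%N); [lia | by rewrite e].
Qed.

Definition cat_fun (f g : nat -> X) n := fun i => if (i <= n)%N then f i else g (i - n)%N.

Lemma FW_cat f g n m : f n = g 0%N -> FW f n -> FW g m -> FW (cat_fun f g n) (n + m).
Proof.
move=> e hf hg i hi; rewrite /cat_fun.
case: (ltnP i n) => hin.
  by rewrite (ltnW hin); apply: hf.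
case: (eqVneq i n) => [->|hne].
  by rewrite leqnn subSn // subnn e; apply: (hg 0%N); lia.
have h1 : (i <= n)%N = false by lia.
rewrite h1 subSn; last by lia.
apply: hg; lia.
Qed.

Lemma NB_cat f g n m : f n = g 0%N -> NB f n -> NB g m ->
  ((0 < n)%N -> (0 < m)%N -> f n.-1 <> g 1%N) ->
  NB (cat_fun f g n) (n + m).
Proof.
move=> e hf hg hj i hi; rewrite /cat_fun.
case: (leqP i.+2 n) => h2.
  have -> : (i <= n)%N = true by lia.
  by apply: hf.
case: (eqVneq i.+1 n) => [hn|hn].
  have -> : (i <= n)%N = true by lia.
  have -> : (i.+2 - n = 1)%N by lia.
  have -> : i = n.-1 by lia.
  apply: hj; lia.
case: (eqVneq i n) => [hn'|hn'].
  have -> : (i <= n)%N = true by lia.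
  have -> : (i.+2 - n = 2)%N by lia.
  rewrite hn' e; apply: hg; lia.
have -> : (i <= n)%N = false by lia.
have -> : (i.+2 - n = (i - n).+2)%N by lia.
apply: hg; lia.
Qed.

Lemma uniq_nb n m f g : FW f n -> NB f n -> FW g m -> NB g m ->
  f 0%N = g 0%N -> f n = g m -> n = m /\ forall i, (i <= n)%N -> f i = g i.
Proof.
elim: n m f g => [|n IH] m f g hf nf hg ng e0 en.
  have m0 : m = 0%N by apply: (cycle_nb hg ng); rewrite -en.
  by subst; split => // i; rewrite leqn0 => /eqP ->.
case: m hg ng en => [|m] hg ng en.
  by have := cycle_nb hf nf (etrans en (esym e0)).
case: (pselect (f n = g m)) => hfg.
  have [hnm hi] := IH m f g (FW_le (leqnSn _) hf) (NB_le (leqnSn _) nf)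
    (FW_le (leqnSn _) hg) (NB_le (leqnSn _) ng) e0 hfg.
  subst m; split => // i; rewrite leq_eqVlt => /orP[/eqP ->|hlt]; [exact: en | apply: hi; by rewrite -ltnS].
exfalso.
have E : f n.+1 = (fun i => g (m.+1 - i)%N) 0%N by rewrite /= subn0.
have J : (0 < n.+1)%N -> (0 < m.+1)%N -> f n.+1.-1 <> (fun i => g (m.+1 - i)%N) 1%N.
  by move=> _ _; rewrite /= subn1.
have H := @cycle_nb (cat_fun f (fun i => g (m.+1 - i)%N) n.+1) (n.+1 + m.+1)
  (FW_cat E hf (FW_rev hg)) (NB_cat E nf (NB_rev ng) J).
move: H; rewrite /cat_fun leq0n.
have -> : (n.+1 + m.+1 <= n.+1)%N = false by lia.
have -> : (m.+1 - (n.+1 + m.+1 - n.+1) = 0)%N by lia.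
by move=> H; have := H (esym e0).
Qed.

Lemma reduce_walk f n : FW f n -> exists g m, [/\ (m <= n)%N, FW g m, NB g m,
  g 0%N = f 0%N & g m = f n].
Proof.
elim: n => [|n IH] hf.
  by exists f, 0%N; split => // i; rewrite ltn0.
have [g [m [hm hg ng g0 gm]]] := IH (FW_le (leqnSn _) hf).
case: (pselect ((0 < m)%N /\ g m.-1 = f n.+1)) => [[m0 e]|hne].
  exists g, m.-1; split; [lia | apply: (FW_le _ hg); lia | apply: (NB_le _ ng); lia | done | done].
exists (fun i => if (i <= m)%N then g i else f n.+1), m.+1; split.
- lia.
- move=> i hi; have [h|h] : (i < m)%N \/ (m <= i)%N by lia.
    have -> : (i <= m)%N = true by lia.
    have -> : (i.+1 <= m)%N = true by lia.
    by apply: hg.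
  have -> : i = m by lia.
  rewrite leqnn ltnn gm; apply: hf; lia.
- move=> i hi; have [h|h] : (i.+2 <= m)%N \/ (m < i.+2)%N by lia.
    have -> : (i <= m)%N = true by lia.
    have -> : (i.+2 <= m)%N = true by lia.
    by apply: ng.
  have -> : i = m.-1 by lia.
  have -> : (m.-1 <= m)%N = true by lia.
  have -> : (m.-1.+2 <= m)%N = false by lia.
  move=> e; apply: hne; split; first lia; done.
- done.
- by rewrite ltnn.
Qed.

Lemma walkn_FW n x y : walkn adj n x y ->
  exists f, [/\ FW f n, f 0%N = x & f n = y].
Proof.
case=> p [hw [hl hs]]; subst n.
elim: p x hw hl => [|z p IH] x hw hl.
  by exists (fun _ => x); split => // i; rewrite ltn0.
case: hw => hxz hw; have [f [hf f0 fe]] := IH z hw hl.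
exists (fun i => if i is i'.+1 then f i' else x); split => //.
by move=> [|i] hi /=; [rewrite f0 | apply: hf].

Qed.

Lemma FW_walkn f n : FW f n -> walkn adj n (f 0%N) (f n).
Proof.
by move=> h; exists (wseq f n); rewrite wseq_last wseq_size; split => //; apply: wseq_walk.
Qed.

Lemma dist_le f n : FW f n -> (dist adj (f 0%N) (f n) <= n)%N.
Proof.
move=> h; rewrite /dist; case: pselect => [hh|[]]; last by exists n; exact: FW_walkn.
case: ex_minnP => m hm; apply; exact/asboolP/FW_walkn.
Qed.

Lemma dist_nb f n : FW f n -> NB f n -> dist adj (f 0%N) (f n) = n.
Proof.
move=> h nh; rewrite /dist; case: pselect => [hh|[]]; last by exists n; exact: FW_walkn.
case: ex_minnP => m /asboolP hm hmin; apply/eqP; rewrite eqn_leq hmin; last first.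
  exact/asboolP/FW_walkn.
have [g [hg g0 gm]] := walkn_FW hm.
have [g' [m' [hm' hg' ng' g0' gm']]] := reduce_walk hg.
have e1 : f 0%N = g' 0%N by rewrite g0' g0.
have e2 : f n = g' m' by rewrite gm' gm.
have [-> _] := uniq_nb h nh hg' ng' e1 e2.
exact: hm'.
Qed.

Lemma dist0 x y : dist adj x y = 0%N -> (exists n, walkn adj n x y) -> x = y.
Proof.
move=> h hh; move: h; rewrite /dist; case: pselect => [hh'|//].
case: ex_minnP => m /asboolP hm _ m0; subst m.
by case: hm => p [_ [hl hs]]; case: p hl hs.
Qed.

End Walks.

End Part1.
Import Part1.

Module Part2.
Set Implicit Arguments.
Unset Strict Implicit.
Unset Printing Implicit Defensive.
Import GRing.Theory Num.Theory.

Section Rays.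
Variables (X : choiceType) (adj : X -> X -> Prop).
Hypothesis adj_sym : forall x y, adj x y -> adj y x.
Hypothesis acyc : forall x p, walk adj x p -> nonbacktracking x p -> last x p = x -> p = [::].

Lemma ray_FW r n : ray adj r -> FW adj r n.
Proof. by move=> h i _; case: (h i). Qed.
Lemma ray_NB r n : ray adj r -> NB r n.
Proof. by move=> h i _; case: (h i). Qed.

Lemma ray_shift r k : ray adj r -> ray adj (fun i => r (k + i)%N).
Proof. by move=> h i; rewrite !addnS; case: (h (k + i)%N). Qed.

Lemma ray_inj r i j : ray adj r -> r i = r j -> i = j.
Proof.
move=> h; wlog hij : i j / (i <= j)%N.
  move=> H e; case: (leqP i j) => hh; first exact: H.
  by apply/esym/H => //; exact: ltnW.
move=> e.
have := @cycle_nb _ _ acyc (fun t => r (i + t)%N) (j - i)%N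
  (ray_FW (ray_shift i h)) (ray_NB (ray_shift i h)).
rewrite addn0 subnKC // => H; have := H (esym e); lia.
Qed.

Lemma dist_ray r i k : ray adj r -> dist adj (r i) (r (i + k)%N) = k.
Proof.
move=> h; have := @dist_nb _ _ adj_sym acyc (fun t => r (i + t)%N) k
  (ray_FW (ray_shift i h)) (ray_NB (ray_shift i h)).
by rewrite addn0.
Qed.

Lemma ends_eq_refl (r : nat -> X) : ends_eq r r.
Proof. by exists 0%N, 0%N. Qed.
Lemma ends_eq_sym (r r' : nat -> X) : ends_eq r r' -> ends_eq r' r.
Proof. by case=> k [m h]; exists m, k => j; rewrite h. Qed.
Lemma ends_eq_trans (r1 r2 r3 : nat -> X) : ends_eq r1 r2 -> ends_eq r2 r3 -> ends_eq r1 r3.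
Proof.
case=> k [m h] [k' [m' h']]; exists (k' + k)%N, (m + m')%N => j.
by rewrite addnA h -(addnA j k' m) (addnC k' m) addnA h' -addnA.
Qed.
Lemma ends_eq_shift (r : nat -> X) k : ends_eq (fun i => r (k + i)%N) r.
Proof. by exists 0%N, k => j; rewrite addn0 addnC. Qed.
Lemma ends_eq_map (h : X -> X) (r r' : nat -> X) :
  ends_eq r r' -> ends_eq (h \o r) (h \o r').
Proof. by case=> k [m e]; exists k, m => j /=; rewrite e. Qed.

Lemma ray_uniq r r' : ray adj r -> ray adj r' -> r 0%N = r' 0%N -> ends_eq r r' ->
  forall i, r i = r' i.
Proof.
move=> h h' e0 [k [m e]].
have ek : r k = r' m by have := e 0%N; rewrite !add0n.
have [km hi] := uniq_nb adj_sym acyc (@ray_FW _ k h) (@ray_NB _ k h) (@ray_FW _ m h')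
   (@ray_NB _ m h') e0 ek.
subst m => i; case: (leqP i k) => hik; first exact: hi.
by have := e (i - k)%N; rewrite subnK // ltnW.
Qed.

Lemma couple_of_point ro rx i k : ray adj ro -> ray adj rx -> ends_eq ro rx ->
  ro i = rx k -> forall j, ro (i + j)%N = rx (k + j)%N.
Proof.
move=> h h' e p; apply: (ray_uniq (ray_shift i h) (ray_shift k h')).
  by rewrite !addn0.
apply: ends_eq_trans (ends_eq_shift _ _) _.
apply: ends_eq_trans e _; exact/ends_eq_sym/ends_eq_shift.
Qed.

Lemma couple_diff ro rx a b a' b' : ray adj rx ->
  (forall j, ro (a + j)%N = rx (b + j)%N) ->
  (forall j, ro (a' + j)%N = rx (b' + j)%N) -> (a + b' = a' + b)%N.
Proof.
move=> h e e'; have := e a'; have := e' a; rewrite addnC => ->.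
move/(ray_inj h); lia.
Qed.

Lemma horo_eq o x w ro rx a b : ray_to adj o w ro -> ray_to adj x w rx ->
  (forall j, ro (a + j)%N = rx (b + j)%N) -> horo adj o x w = (Posz a - Posz b)%R.
Proof.
move=> [hro [ro0 row]] [hrx [rx0 rxw]] e.
have erx : ends_eq ro rx by apply: ends_eq_trans row (ends_eq_sym rxw).
pose P := fun y => exists ro rx ry, ray_to adj o w ro /\ ray_to adj x w rx /\
      ray_to adj y w ry /\
      forall v, (on_ray ro v /\ on_ray rx v) <-> on_ray ry v.
have exP : exists y, P y.
  have hex : exists a0, `[< exists b0, forall j, ro (a0 + j)%N = rx (b0 + j)%N >].
    by exists a; apply/asboolP; exists b.
  case: (ex_minnP hex) => a0 /asboolP [b0 e0] amin.
  exists (ro a0), ro, rx, (fun i => ro (a0 + i)%N); split; first by [].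
  split; first by [].
  split.
    split; first exact: ray_shift.
    split; first by rewrite addn0.
    exact: ends_eq_trans (ends_eq_shift _ _) row.
  move=> v; split.
    move=> [[i vi] [k vk]].
    have cp := couple_of_point hro hrx erx (etrans vi (esym vk)).
    have ai : (a0 <= i)%N by apply: amin; apply/asboolP; exists k.
    by exists (i - a0)%N; rewrite subnKC.
  move=> [j vj]; split; first by exists (a0 + j)%N.
  by exists (b0 + j)%N; rewrite -e0.
have := ClassicalEpsilon.epsilon_spec (inhabits o) P exP.
rewrite /horo /confluence -/P.
set y := ClassicalEpsilon.epsilon _ _.
move=> [ro' [rx' [ry [[hro' [ro0' row']] [[hrx' [rx0' rxw']] [[hry [ry0 ryw]] hv]]]]]].
have hyo : on_ray ro' y /\ on_ray rx' y by apply/hv; exists 0%N.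
have Ero : forall i, ro' i = ro i.
  apply: ray_uniq => //; first by rewrite ro0 ro0'.
  exact: ends_eq_trans row' (ends_eq_sym row).
have Erx : forall i, rx' i = rx i.
  apply: ray_uniq => //; first by rewrite rx0 rx0'.
  exact: ends_eq_trans rxw' (ends_eq_sym rxw).
case: hyo => [[i yi] [k yk]]; rewrite Ero in yi; rewrite Erx in yk.
have cp := couple_of_point hro hrx erx (etrans yi (esym yk)).
have := couple_diff hrx e cp.
have d1 : dist adj o y = i by have := dist_ray 0 i hro; rewrite add0n ro0 yi.
have d2 : dist adj x y = k by have := dist_ray 0 k hrx; rewrite add0n rx0 yk.
rewrite d1 d2 => H.
apply/eqP; rewrite subr_eq addrAC eq_sym subr_eq -!PoszD; apply/eqP; congr Posz; lia.
Qed.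

Lemma xpt_eq o w rp n : ray_to adj o w rp -> xpt adj o w n = rp n.
Proof.
move=> [hrp [rp0 rpw]].
pose P := fun v => exists r, ray_to adj o w r /\ on_ray r v /\ dist adj o v = n.
have exP : exists v, P v.
  exists (rp n), rp; split; first by [].
  split; first by exists n.
  by rewrite -rp0 -(add0n n) dist_ray.
have := ClassicalEpsilon.epsilon_spec (inhabits o) P exP.
rewrite /xpt -/P; set v := ClassicalEpsilon.epsilon _ _.
move=> [r [[hr [r0 rw]] [[i vi] dv]]].
have Er : forall i, r i = rp i.
  apply: ray_uniq => //; first by rewrite r0 rp0.
  exact: ends_eq_trans rw (ends_eq_sym rpw).
rewrite -vi -r0 -(add0n i) dist_ray // in dv.
by rewrite -vi Er dv.
Qed.

End Rays.

End Part2.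
Import Part2.

Module Part3.
Set Implicit Arguments.
Unset Strict Implicit.
Unset Printing Implicit Defensive.
Import GRing.Theory Num.Theory.

Section Tree2.
Variables (X : choiceType) (adj : X -> X -> Prop).
Hypothesis adj_sym : forall x y, adj x y -> adj y x.
Hypothesis acyc : forall x p, walk adj x p -> nonbacktracking x p -> last x p = x -> p = [::].

Lemma ray_from_walk (rp : nat -> X) : ray adj rp -> forall m f k, FW adj f m -> f m = rp k ->
  exists r, [/\ ray adj r, r 0%N = f 0%N & exists a b, forall j, r (a + j)%N = rp (b + j)%N].
Proof.
move=> hrp; elim=> [|m IH] f k hf fe.
  exists (fun i => rp (k + i)%N); split; first exact: ray_shift.
    by rewrite addn0.
  by exists 0%N, k.
have [r' [hr' r0' [a [b e]]]] := IH (fun i => f i.+1) k (fun i hi => hf i.+1 hi) fe.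
case: (pselect (r' 1%N = f 0%N)) => h1.
  exists (fun i => r' i.+1); split; first by move=> i; case: (hr' i.+1).
    exact: h1.
  by exists a, b.+1 => j; rewrite -addnS e addnS.
exists (fun i => if i is i'.+1 then r' i' else f 0%N); split; last 1 first.
  by exists a.+1, b => j; rewrite addSn e.
  2: by [].
  move=> [|i] /=; first by rewrite r0'; split; [apply: hf | move=> e'; apply: h1].
  exact: hr'.
Qed.

Lemma couple_min (rx rp : nat -> X) a : (forall j, rp (a + j)%N = rx (a + j)%N) ->
  exists a', [/\ (a' <= a)%N, (forall j, rp (a' + j)%N = rx (a' + j)%N) &
    (a' = 0%N \/ rp a'.-1 <> rx a'.-1)].
Proof.
elim: a => [|a IH] e.
  by exists 0%N; split => //; left.
case: (pselect (rp a = rx a)) => h.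
  have e' : forall j, rp (a + j)%N = rx (a + j)%N.
    by case=> [|j]; rewrite ?addn0 // addnS -addSn e.
  have [a' [h1 h2 h3]] := IH e'; exists a'; split => //; lia.
by exists a.+1; split => //; right.
Qed.

Lemma down_walk (rx rp : nat -> X) a : ray adj rx -> ray adj rp ->
  (forall j, rp (a + j)%N = rx (a + j)%N) -> (a = 0%N \/ rp a.-1 <> rx a.-1) ->
  let h := cat_fun rx (fun i => rp (a - i)%N) a in
  [/\ FW adj h (a + a), NB h (a + a), h 0%N = rx 0%N & h (a + a)%N = rp 0%N].
Proof.
move=> hrx hrp e hm h.
have E : rx a = (fun i => rp (a - i)%N) 0%N by rewrite /= subn0 -(addn0 a) e.
have J : (0 < a)%N -> (0 < a)%N -> rx a.-1 <> (fun i => rp (a - i)%N) 1%N.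
  move=> a0 _; rewrite /= subn1 => ee; case: hm => [a00|]; first lia.
  by rewrite ee.
split.
- rewrite /h; exact: (FW_cat E (ray_FW hrx) (FW_rev adj_sym (ray_FW hrp))).
- rewrite /h; exact: (NB_cat E (ray_NB hrx) (NB_rev (ray_NB hrp)) J).
- by rewrite /h /cat_fun leq0n.
- rewrite /h /cat_fun; case: ifP => hh.
    have a0 : a = 0%N by lia.
    by subst a.
  by rewrite addKn subnn.
Qed.

Lemma cat_ray h n (r : nat -> X) : FW adj h n -> NB h n -> ray adj r -> h n = r 0%N ->
  ((0 < n)%N -> h n.-1 <> r 1%N) -> ray adj (cat_fun h r n).
Proof.
move=> fh nh hr e J i /=; split.
  apply: (FW_cat (m := i.+3) e fh (ray_FW hr)); lia.
apply: (NB_cat (m := i.+3) e nh (ray_NB hr)); last lia.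
by move=> h0 _; apply: J.
Qed.

Lemma cat_couple h n (r : nat -> X) : h n = r 0%N ->
  forall j, r (0 + j)%N = cat_fun h r n (n + j)%N.
Proof.
move=> e j; rewrite /cat_fun; case: ifP => hh.
  have -> : j = 0%N by lia.
  by rewrite !addn0 e.
by rewrite addKn add0n.
Qed.

Variable q : nat.
Variable nbf : X -> 'I_q.+1 -> X.
Hypothesis nbf_adj : forall x y, adj x y <-> exists i, nbf x i = y.

Fixpoint Enum (n : nat) (p v : X) : seq X :=
  if n is n'.+1 then flatten [seq Enum n' v (nbf v i) | i <- enum 'I_q.+1 & nbf v i != p]
  else [:: v].

Lemma Enum_mem n f : FW adj f n.+1 -> NB f n.+1 -> f n.+1 \in Enum n (f 0%N) (f 1%N).
Proof.
elim: n f => [|n IH] f hf nf; first by rewrite mem_seq1.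
rewrite /=; apply/flatten_mapP.
have [i hi] : exists i, nbf (f 1%N) i = f 2%N by apply/nbf_adj; apply: hf.
exists i.
  rewrite mem_filter mem_enum andbT hi; apply/eqP => e.
  by apply: (nf 0%N) => //; rewrite e.
rewrite hi; apply: (IH (fun i => f i.+1)).
  by move=> j hj; apply: hf.
by move=> j hj; apply: nf.
Qed.

Lemma size_flatten_le (T U : Type) (F : T -> seq U) (s : seq T) K :
  (forall x, size (F x) <= K)%N -> (size (flatten (map F s)) <= size s * K)%N.
Proof.
move=> hF; elim: s => [|x s IH] //=.
by rewrite size_cat mulSn leq_add.
Qed.

Lemma Enum_size n p v : adj v p -> (size (Enum n p v) <= q ^ n)%N.
Proof.
elim: n p v => [|n IH] p v hvp; first by [].
rewrite /= expnS.
have hF : forall i, (size (Enum n v (nbf v i)) <= q ^ n)%N.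
  move=> i; apply: IH; apply: adj_sym; apply/nbf_adj; by exists i.
apply: leq_trans (@size_flatten_le _ _ (fun i => Enum n v (nbf v i)) _ _ hF) _.
apply: leq_mul => //.
rewrite size_filter.
have [i0 hi0] : exists i, nbf v i = p by apply/nbf_adj.
have hc : (0 < count (fun i => nbf v i == p) (enum 'I_q.+1))%N.
  rewrite -has_count; apply/hasP; exists i0; first by rewrite mem_enum.
  by rewrite hi0.
have := count_predC (fun i => nbf v i == p) (enum 'I_q.+1).
rewrite size_enum_ord.
have -> : count (predC (fun i => nbf v i == p)) (enum 'I_q.+1) =
  count (fun i => nbf v i != p) (enum 'I_q.+1) by apply: eq_count.
lia.
Qed.

End Tree2.

End Part3.
Import Part3.

Module Part4.
Set Implicit Arguments.
Unset Strict Implicit.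
Unset Printing Implicit Defensive.
Import GRing.Theory Num.Theory.
Local Open Scope classical_set_scope.

Section Meas.
Variable X : choiceType.
Variable e : nat -> X.
Hypothesis e_surj : forall x, exists k, e k = x.

Notation mble := (@measurable _ (AutM X)).

Lemma mcyl x y : mble [set u : AutM X | u x = y].
Proof. by apply: sub_sigma_algebra; exists x, y. Qed.

Lemma mpred1 x (Q : X -> Prop) : mble [set u : AutM X | Q (u x)].
Proof.
have -> : [set u : AutM X | Q (u x)] =
   \bigcup_k (if `[< Q (e k) >] then [set u : AutM X | u x = e k] else set0).
  apply/funext => u; apply/propext; split.
    move=> hq; have [k hk] := e_surj (u x); exists k => //.
    by rewrite hk; case: asboolP.
  move=> [k _]; case: asboolP => // hq /= hu; by rewrite hu.
apply: bigcupT_measurable => k; case: asboolP => _; [exact: mcyl | exact: measurable0].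
Qed.

Lemma mpred2 x y (Q : X -> X -> Prop) : mble [set u : AutM X | Q (u x) (u y)].
Proof.
have -> : [set u : AutM X | Q (u x) (u y)] =
   \bigcup_k ([set u : AutM X | u x = e k] `&` [set u : AutM X | Q (e k) (u y)]).
  apply/funext => u; apply/propext; split.
    move=> hq; have [k hk] := e_surj (u x); exists k => //.
    by split => //=; rewrite hk.
  by move=> [k _ [/= -> h]].
apply: bigcupT_measurable => k; apply: measurableI; [exact: mcyl | exact: mpred1].
Qed.

Lemma mforalln (P : nat -> set (AutM X)) : (forall k, mble (P k)) ->
  mble [set u | forall k, P k u].
Proof.
move=> h; have -> : [set u | forall k, P k u] = \bigcap_k P k.
  by apply/funext => u; apply/propext; split => H k //; apply: H.
exact: bigcapT_measurable.
Qed.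

Lemma mexistsn (P : nat -> set (AutM X)) : (forall k, mble (P k)) ->
  mble [set u | exists k, P k u].
Proof.
move=> h; have -> : [set u | exists k, P k u] = \bigcup_k P k.
  by apply/funext => u; apply/propext; split => [[k hk]|[k _ hk]]; exists k.
exact: bigcupT_measurable.
Qed.

Lemma mforallX (P : X -> set (AutM X)) : (forall x, mble (P x)) ->
  mble [set u | forall x, P x u].
Proof.
move=> h; have -> : [set u | forall x, P x u] = [set u | forall k, P (e k) u].
  apply/funext => u; apply/propext; split => H; first by move=> k; apply: H.
  by move=> x; have [k <-] := e_surj x.
by apply: mforalln => k.
Qed.

Lemma mexistsX (P : X -> set (AutM X)) : (forall x, mble (P x)) ->
  mble [set u | exists x, P x u].
Proof.
move=> h; have -> : [set u | exists x, P x u] = [set u | exists k, P (e k) u].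
  apply/funext => u; apply/propext; split => [[x]|[k hk]]; last by exists (e k).
  by have [k <-] := e_surj x; exists k.
by apply: mexistsn => k.
Qed.

Lemma mand (P Q : set (AutM X)) : mble P -> mble Q -> mble [set u | P u /\ Q u].
Proof. exact: measurableI. Qed.

Lemma bijectiveP (u : X -> X) : bijective u <->
  (forall x y, u x = u y -> x = y) /\ (forall y, exists x, u x = y).
Proof.
split.
  case=> g h1 h2; split; first exact: can_inj h1.
  by move=> y; exists (g y).
move=> [hi hs]; have [g hg] := boolp.choice hs.
by exists g => // x; apply: hi; rewrite hg.
Qed.

Lemma mBw (adj : X -> X -> Prop) w : mble (Bw adj w).
Proof.
have -> : Bw adj w = [set u : AutM X | (((forall x y, u x = u y -> x = y) /\
    (forall y, exists x, u x = y)) /\ (forall x y, adj x y <-> adj (u x) (u y))) /\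
    ((exists k m, forall j, u (w (j + k)%N) = w (j + m)%N) /\ exists x, u x = x)].
  apply/funext => u; apply/propext; rewrite /Bw /is_aut /ends_eq /=.
  by rewrite (propext (bijectiveP u)).
apply: (@mand [set u : AutM X | ((forall x y, u x = u y -> x = y) /\
    (forall y, exists x, u x = y)) /\ (forall x y, adj x y <-> adj (u x) (u y))]
  [set u : AutM X | (exists k m, forall j, u (w (j + k)%N) = w (j + m)%N) /\ exists x, u x = x]).
  apply: (@mand [set u : AutM X | (forall x y, u x = u y -> x = y) /\
    (forall y, exists x, u x = y)]).
    apply: mand.
- apply: mforallX => x; apply: mforallX => y; exact: (mpred2 x y (fun a b => a = b -> x = y)).
- apply: mforallX => y; apply: mexistsX => x; exact: (mpred1 x (fun a => a = y)).
- apply: mforallX => x; apply: mforallX => y; exact: (mpred2 x y (fun a b => adj x y <-> adj a b)).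
apply: mand.
- apply: mexistsn => k; apply: mexistsn => m; apply: mforalln => j.
  exact: (mpred1 _ (fun a => a = w (j + m)%N)).
- apply: mexistsX => x; exact: (mpred1 x (fun a => a = x)).
Qed.

End Meas.

End Part4.
Import Part4.

Module Part5.
Set Implicit Arguments.
Unset Strict Implicit.
Unset Printing Implicit Defensive.
Import GRing.Theory Num.Theory.

Section TreeMain.
Variables (q : nat) (X : choiceType) (adj : X -> X -> Prop) (o : X) (wm wp : nat -> X).
Variables (rm rp : nat -> X).
Hypothesis adj_sym : forall x y, adj x y -> adj y x.
Hypothesis acyc : forall x p, walk adj x p -> nonbacktracking x p -> last x p = x -> p = [::].
Hypothesis conn : forall x y, exists p, walk adj x p /\ last x p = y.
Variable nbf : X -> 'I_q.+1 -> X.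
Hypothesis nbf_adj : forall x y, adj x y <-> exists i, nbf x i = y.
Hypothesis hrm : ray_to adj o wm rm.
Hypothesis hrp : ray_to adj o wp rp.
Hypothesis hrmp : rm 1%N <> rp 1%N.

Fixpoint follow (x : X) (s : seq 'I_q.+1) : X :=
  if s is i :: s' then follow (nbf x i) s' else x.

Lemma follow_walk x p : walk adj x p -> exists s, follow x s = last x p.
Proof.
elim: p x => [|z p IH] x /=; first by exists [::].
move=> [hxz hw]; have [i hi] := (nbf_adj x z).1 hxz.
have [s hs] := IH z hw; exists (i :: s) => /=; by rewrite hi.
Qed.

Definition enumX (k : nat) : X :=
  if unpickle k is Some s then follow o s else o.

Lemma enumX_surj x : exists k, enumX k = x.
Proof.
have [p [hw hl]] := conn o x; have [s hs] := follow_walk hw.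
by exists (pickle s); rewrite /enumX pickleK hs hl.
Qed.

Lemma walk_exists x y : exists n, walkn adj n x y.
Proof. by have [p [hw hl]] := conn x y; exists (size p), p. Qed.

Lemma aut_inj u : is_aut adj u -> injective u.
Proof. by case=> [[g h1 _] _]; exact: can_inj h1. Qed.

Lemma aut_comp u v : is_aut adj u -> is_aut adj v -> is_aut adj (u \o v).
Proof.
move=> [bu au] [bv av]; split; first exact: bij_comp.
by move=> x y; rewrite av au.
Qed.

Lemma aut_inv u ui : is_aut adj u -> cancel u ui -> cancel ui u -> is_aut adj ui.
Proof.
move=> [bu au] h1 h2; split; first by exists u.
by move=> x y; rewrite (au (ui x) (ui y)) !h2.
Qed.

Lemma aut_ray u r : is_aut adj u -> ray adj r -> ray adj (u \o r).
Proof.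
move=> hu hr i; case: (hr i) => h1 h2; split; first exact: ((hu.2 _ _).1 h1).
by move=> /= /(aut_inj hu).
Qed.

Lemma fix_ray u k : is_aut adj u -> ends_eq (u \o wp) wp -> u (rp k) = rp k ->
  forall j, u (rp (k + j)%N) = rp (k + j)%N.
Proof.
move=> hu he hk; case: hrp => [hr [r0 rw]].
apply: (ray_uniq adj_sym acyc (aut_ray hu (ray_shift k hr)) (ray_shift k hr)).
  by rewrite /= addn0.
apply: ends_eq_trans (ends_eq_map u (ends_eq_shift rp k)) _.
apply: ends_eq_trans (ends_eq_map u rw) _.
apply: ends_eq_trans he _.
apply: ends_eq_trans (ends_eq_sym rw) _.
exact/ends_eq_sym/ends_eq_shift.
Qed.

Lemma horo_rp n : horo adj o (rp n) wp = Posz n.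
Proof.
case: hrp => [hr [r0 rw]].
rewrite (@horo_eq _ _ adj_sym acyc o (rp n) wp rp (fun i => rp (n + i)%N) n 0%N) //.
- by rewrite subr0.
- split; first exact: ray_shift.
  split; first by rewrite addn0.
  exact: ends_eq_trans (ends_eq_shift _ _) rw.
Qed.

Lemma horo_oo : horo adj o o wp = 0%R.
Proof. by case: hrp => [hr [r0 rw]]; have := horo_rp 0; rewrite r0. Qed.

Lemma GL x rx a : ray adj rx -> rx 0%N = x -> ends_eq rx wp ->
  (forall j, rp (a + j)%N = rx (a + j)%N) ->
  exists a', [/\ (a' <= a)%N, dist adj x o = (a' + a')%N,
    horo adj o x wm = (- Posz (a' + a'))%R & forall j, rp (a' + j)%N = rx (a' + j)%N].
Proof.
move=> hrx rx0 rxw e.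
case: hrp => [hr [r0 rw]]; case: hrm => [hm [m0 mw]].
have [a' [ha' e' hmin]] := couple_min e.
exists a'.
have [fh nh h0 h2] := down_walk adj_sym hrx hr e' hmin.
set h := cat_fun _ _ _ in fh nh h0 h2.
split => //.
- have := dist_nb adj_sym acyc fh nh; by rewrite h0 h2 rx0 r0.
- have hro : h (a' + a')%N = rm 0%N by rewrite h2 r0 m0.
  have J : (0 < a' + a')%N -> h (a' + a').-1 <> rm 1%N.
    move=> hpos; rewrite /h /cat_fun.
    case: ifP => hh.
      have a1 : a' = 1%N by lia.
      subst a'; have := e' 0%N; rewrite !addn0 /= => <-; by apply: nesym.
    have -> : (a' - ((a' + a').-1 - a') = 1)%N by lia.
    by apply: nesym.
  have hc := cat_ray fh nh hm hro J.
  rewrite (@horo_eq _ _ adj_sym acyc o x wm rm (cat_fun h rm (a' + a')) 0%N (a' + a')%N) //.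
  + by rewrite sub0r.
  + split; first exact: hc.
    split; first by rewrite /cat_fun leq0n h0.
    apply: ends_eq_trans _ mw.
    exists (a' + a')%N, 0%N => j.
    by rewrite addn0 addnC -(cat_couple hro j) add0n.
  + exact: cat_couple.
Qed.

Lemma Bn_props n u : is_aut adj u -> ends_eq (u \o wp) wp -> u (rp n) = rp n ->
  [/\ horo adj o (u o) wp = 0%R, (dist adj (u o) o <= 2 * n)%N &
      horo adj o (u o) wm = (- Posz (dist adj (u o) o))%R].
Proof.
move=> hu he hn.
have hfix := fix_ray hu he hn.
case: hrp => [hr [r0 rw]].
have hrx : ray adj (u \o rp) := aut_ray hu hr.
have rxw : ends_eq (u \o rp) wp := ends_eq_trans (ends_eq_map u rw) he.
have e : forall j, rp (n + j)%N = (u \o rp) (n + j)%N by move=> j /=; rewrite hfix.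
have x0 : (u \o rp) 0%N = u o by rewrite /= r0.
have [a' [ha' hd hh _]] := GL hrx x0 rxw e.
split.
- have hrt : ray_to adj (u o) wp (u \o rp) by split; [|split].
  by rewrite (horo_eq adj_sym acyc hrp hrt e) subrr.
- rewrite hd; lia.
- by rewrite hh hd.
Qed.

Lemma Sn_enum n x : horo adj o x wp = 0%R -> (dist adj x o <= 2 * n)%N ->
  x \in Enum nbf n (rp n.+1) (rp n).
Proof.
move=> hh hd.
case: hrp => [hr [r0 rw]].
have [p [hw hl]] := conn x o.
have [f [hf f0 fe]] := walkn_FW (ex_intro _ p (conj hw (conj hl erefl))).
have fe' : f (size p) = rp 0%N by rewrite fe r0.
have [rx [hrx rx0 [a [b eab]]]] := ray_from_walk hr hf fe'.
have rxw : ends_eq rx wp.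
  apply: ends_eq_trans _ rw; exists a, b => j; by rewrite addnC eab addnC.
have hrt : ray_to adj x wp rx by split; [|split; [rewrite rx0 f0|]].
have eba : forall j, rp (b + j)%N = rx (a + j)%N by move=> j; rewrite eab.
have hab : horo adj o x wp = (Posz b - Posz a)%R := horo_eq adj_sym acyc hrp hrt eba.
have ba : b = a.
  move: hh; rewrite hab => /eqP; rewrite subr_eq0 => /eqP; by case.
subst b.
have x0 : rx 0%N = x by rewrite rx0 f0.
have [a' [ha' hd' _ e']] := GL hrx x0 rxw (fun j => esym (eab j)).
have an : (a' <= n)%N by rewrite hd' in hd; lia.
have F1 := FW_rev adj_sym (@ray_FW _ _ _ n.+1 hrx).
have N1 := NB_rev (@ray_NB _ _ _ n.+1 hrx).
have := Enum_mem nbf_adj F1 N1.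
rewrite /= subnn rx0 f0 subn0 subn1 /=.
have -> : rx n.+1 = rp n.+1 by have := e' (n.+1 - a')%N; rewrite subnKC //; lia.
have -> : rx n = rp n by have := e' (n - a')%N; rewrite subnKC //.
done.
Qed.

End TreeMain.

End Part5.
Import Part5.

Module Part6.
Import finmap.
Set Implicit Arguments.
Unset Strict Implicit.
Unset Printing Implicit Defensive.
Import GRing.Theory Num.Theory.
Local Open Scope classical_set_scope.
Local Open Scope ring_scope.
Local Open Scope classical_set_scope.

Section MeasMain.
Variables (R : realType) (q : nat) (X : choiceType) (adj : X -> X -> Prop) (o : X).
Variables (wm wp rm rp : nat -> X).
Variable (mu : {measure set (AutM X) -> \bar R}).
Hypothesis adj_sym : forall x y, adj x y -> adj y x.
Hypothesis acyc : forall x p, walk adj x p -> nonbacktracking x p -> last x p = x -> p = [::].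
Hypothesis conn : forall x y, exists p, walk adj x p /\ last x p = y.
Variable nbf : X -> 'I_q.+1 -> X.
Hypothesis nbf_adj : forall x y, adj x y <-> exists i, nbf x i = y.
Hypothesis hrm : ray_to adj o wm rm.
Hypothesis hrp : ray_to adj o wp rp.
Hypothesis hrmp : rm 1%N <> rp 1%N.
Hypothesis hmu : haar_normalized adj q o wp mu.

Notation mble := (@measurable _ (AutM X)).

Definition Sn n := [set x : X | horo adj o x wp = 0%R /\ (dist adj x o <= 2 * n)%N].
Definition Pn n x := [set u : AutM X | Bwn adj o wp n u /\ u o = x].

Lemma mBwn n : mble (Bwn adj o wp n).
Proof.
have -> : Bwn adj o wp n = Bw adj wp `&` [set u : AutM X | u (xpt adj o wp n) = xpt adj o wp n] by [].
apply: measurableI; first exact: (mBw (enumX_surj o conn nbf_adj) adj wp).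
exact: mcyl.
Qed.

Lemma mPn n x : mble (Pn n x).
Proof.
have -> : Pn n x = Bwn adj o wp n `&` [set u : AutM X | u o = x] by [].
apply: measurableI; [exact: mBwn | exact: mcyl].
Qed.

Lemma xptE n : xpt adj o wp n = rp n.
Proof. exact: (xpt_eq adj_sym acyc n hrp). Qed.

Lemma Sn_sub n : Sn n `<=` [set` Enum nbf n (rp n.+1) (rp n)].
Proof. by move=> x [h1 h2]; apply: (Sn_enum adj_sym acyc conn nbf_adj hrm hrp hrmp). Qed.

Lemma Sn_fin n : finite_set (Sn n).
Proof. apply: (@sub_finite_set _ _ _ (@Sn_sub n)); exact: finite_seq. Qed.

Lemma Sn_size n : (size (finmap.enum_fset (fset_set (Sn n))) <= q ^ n)%N.
Proof.
apply: (@leq_trans (size (Enum nbf n (rp n.+1) (rp n)))).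
  apply: uniq_leq_size; first exact: finmap.fset_uniq.
  move=> x hx; have : x \in fset_set (Sn n) := hx.
  rewrite (in_fset_set (Sn_fin n)) => /set_mem /Sn_sub; done.
apply: (Enum_size adj_sym nbf_adj n).
case: hrp => [hr _]; exact: (hr n).1.
Qed.

Lemma Bwn_Sn n u : Bwn adj o wp n u -> Sn n (u o).
Proof.
move=> [[hu [he _]] hx]; rewrite xptE in hx.
have [h1 h2 _] := Bn_props adj_sym acyc hrm hrp hrmp hu he hx.
by split.
Qed.

Lemma mu_Bwn n : mu (Bwn adj o wp n) = ((q ^ n)%:R)%:E.
Proof.
have := hmu.2 (rp n); rewrite (horo_rp adj_sym acyc hrp) -exprnP natrX => <-.
by rewrite /Bwn xptE.
Qed.

Lemma mu_Pn n x : Pn n x = set0 \/ mu (Pn n x) = 1%E.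
Proof.
case: (pselect (exists u0, Pn n x u0)) => [[u0 [[[hu0 [he0 _]] hx0] ux0]]|hne]; last first.
  left; apply/funext => u; apply/propext; split => // hu; apply: hne; by exists u.
right.
rewrite xptE in hx0.
pose A := [set v : AutM X | Bw adj wp v /\ v o = o].
have mA : mble A.
  have -> : A = Bw adj wp `&` [set v : AutM X | v o = o] by [].
  apply: measurableI; last exact: mcyl.
  exact: (mBw (enumX_surj o conn nbf_adj) adj wp).
have muA : mu A = 1%E.
  by rewrite /A (hmu.2 o) (horo_oo adj_sym acyc hrp) expr0z.
have [ui h1 h2] : bijective u0 by case: hu0.
have hui : is_aut adj ui := aut_inv hu0 h1 h2.
have heui : ends_eq (ui \o wp) wp.
  have := ends_eq_map ui he0.
  have -> : ui \o (u0 \o wp) = wp by apply/funext => t /=; rewrite h1.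
  exact: ends_eq_sym.
have -> : Pn n x = [set (u0 \o (v : X -> X)) | v in A].
  apply/funext => u; apply/propext; split.
    move=> [[[hu [he _]] hx] ux].
    exists (ui \o u).
      split; last by rewrite /= ux -ux0 h1.
      split; first exact: aut_comp.
      split; last by exists o; rewrite /= ux -ux0 h1.
      apply: ends_eq_trans _ heui.
      exact: (ends_eq_map ui he).
    by apply/funext => t /=; rewrite h2.
  move=> [v [[hv [hev _]] vo] <-].
  have hr0 : v (rp 0%N) = rp 0%N by case: hrp => [_ [-> _]].
  have hvn := fix_ray adj_sym acyc hrp hv hev hr0 n.
  rewrite add0n in hvn.
  split; last by rewrite /= vo.
  split.
    split; first exact: aut_comp.
    split; last by exists (rp n); rewrite /= hvn hx0.
    apply: ends_eq_trans _ he0.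
    exact: (ends_eq_map u0 hev).
  by rewrite xptE /= hvn hx0.
rewrite (hmu.1 u0) //.
  split => //; split => //; by exists (rp n).
by move=> v [].
Qed.

End MeasMain.

End Part6.
Import Part6.

Module Part7.
Set Implicit Arguments.
Unset Strict Implicit.
Unset Printing Implicit Defensive.
Import GRing.Theory Num.Theory.
Import numFieldNormedType.Exports.
Local Open Scope classical_set_scope.
Local Open Scope ring_scope.

Section GenInt.
Variables (d : measure_display) (T : measurableType d) (R : realType).
Variable (mu : {measure set T -> \bar R}).
Variables (I : choiceType) (s : seq I) (P : I -> set T).
Hypothesis us : uniq s.
Hypothesis mP : forall i, measurable (P i).
Hypothesis dP : forall i j, i != j -> P i `&` P j = set0.

Let D := \big[setU/set0]_(i <- s) P i.

Lemma trivP : trivIset [set` s] P.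
Proof.
move=> i j _ _ [u [h1 h2]]; apply/eqP/negPn/negP => /dP H.
by have : (P i `&` P j) u by []; rewrite H.
Qed.

Lemma mfun_pw (c : I -> R) (phi : T -> R) : (forall i u, i \in s -> P i u -> phi u = c i) ->
  measurable_fun D (EFin \o phi).
Proof.
move=> hphi mD Y mY.
have -> : D `&` (EFin \o phi) @^-1` Y =
    \big[setU/set0]_(i <- s) (if `[< Y (c i)%:E >] then P i else set0).
  rewrite /D -!bigcup_seq; apply/funext => u; apply/propext; split.
    move=> [[i hi hu] hy]; exists i => //; case: asboolP => // hn; apply: hn.
    by rewrite -(hphi i u hi hu).
  move=> [i hi]; case: asboolP => // hy hu; split; first by exists i.
  by rewrite /= (hphi i u hi hu).
apply: bigsetU_measurable => i _; case: asboolP => _; [exact: mP | exact: measurable0].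
Qed.

Lemma integral_pw (c : I -> R) (phi : T -> R) :
  (forall i u, i \in s -> P i u -> phi u = c i) ->
  (\int[mu]_(u in D) (phi u)%:E = \sum_(i <- s) (c i)%:E * mu (P i))%E.
Proof.
move=> hphi.
rewrite integral_bigsetU_EFin //; last first.
- exact: (mfun_pw hphi).
- exact: trivP.
rewrite big_seq [RHS]big_seq; apply: eq_bigr => i hi.
rewrite -integral_cst //; apply: eq_integral => u hu /=.
by rewrite (hphi i u) //; move: hu; rewrite inE.
Qed.

Lemma mu_pw : mu D = (\sum_(i <- s) mu (P i))%E.
Proof.
have := @integral_pw (fun _ => 1) (fun _ => 1) (fun _ _ _ _ => erefl).
have mD : measurable D by apply: bigsetU_measurable => i _; exact: mP.
have -> : (\int[mu]_(u in D) (1%:E : \bar R))%E = (\int[mu]_(u in D) (cst 1%:E) u)%E by [].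
rewrite integral_cst // mul1e => ->.
by apply: eq_bigr => i _; rewrite mul1e.
Qed.

End GenInt.

End Part7.
Import Part7.

Module Part8.
Import finmap.
Set Implicit Arguments.
Unset Strict Implicit.
Unset Printing Implicit Defensive.
Import GRing.Theory Num.Theory.
Local Open Scope classical_set_scope.
Local Open Scope ring_scope.
Local Open Scope classical_set_scope.
Local Open Scope complex_scope.

Lemma sum_bool_count (T : Type) (s : seq T) (b : T -> bool) :
  (\sum_(x <- s) (b x : nat))%N = count b s.
Proof. by elim: s => [|x s IH]; rewrite ?big_nil ?big_cons //= IH. Qed.

Lemma sum_complex (R : realType) (T : Type) (s : seq T) (c : T -> R[i]) :
  \sum_(x <- s) c x = (\sum_(x <- s) complex.Re (c x)) +i* (\sum_(x <- s) complex.Im (c x)).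
Proof.
elim: s => [|x s IH]; first by rewrite !big_nil.
by rewrite !big_cons IH; case: (c x).
Qed.

Section Final.
Variables (R : realType) (q : nat) (X : choiceType) (adj : X -> X -> Prop) (o : X).
Variables (wm wp rm rp : nat -> X).
Variable (mu : {measure set (AutM X) -> \bar R}).
Variables (s' : R[i]) (f : X -> (nat -> X) -> R[i]).
Hypothesis adj_sym : forall x y, adj x y -> adj y x.
Hypothesis acyc : forall x p, walk adj x p -> nonbacktracking x p -> last x p = x -> p = [::].
Hypothesis conn : forall x y, exists p, walk adj x p /\ last x p = y.
Variable nbf : X -> 'I_q.+1 -> X.
Hypothesis nbf_adj : forall x y, adj x y <-> exists i, nbf x i = y.
Hypothesis hrm : ray_to adj o wm rm.
Hypothesis hrp : ray_to adj o wp rp.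
Hypothesis hrmp : rm 1%N <> rp 1%N.
Hypothesis hmu : haar_normalized adj q o wp mu.
Hypothesis hwp : ray adj wp.
Hypothesis hf : lc_compact adj f.

Notation mble := (@measurable _ (AutM X)).

Lemma main_n n g : is_aut adj g ->
  Isn adj mu q o wm wp s' n (onGM o wp f) g =
     \sum_(x \in [set x : X | horo adj o x wp = 0 /\ (dist adj x o <= 2 * n)%N])
        f (g x) (g \o wp) *
        cpow (q%:R : R) (- ((dist adj x o)%:R : R)%:C * expo s').
Proof.
move=> hg.
set c := fun x => f (g x) (g \o wp) * cpow (q%:R : R) (- ((dist adj x o)%:R : R)%:C * expo s').
have fin := Sn_fin adj_sym acyc conn nbf_adj hrm hrp hrmp n.
rewrite (fsbig_finite _ _ fin).
set s := enum_fset (fset_set _).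
have us : uniq s := fset_uniq _.
have memS : forall x, (x \in s) = `[< Sn adj o wp n x >].
  move=> x; change ((x \in fset_set (Sn adj o wp n)) = `[< Sn adj o wp n x >]).
  rewrite (in_fset_set fin x); apply/idP/asboolP; [exact: set_mem | exact: mem_set].
have disj : forall x y, x != y -> Pn adj o wp n x `&` Pn adj o wp n y = set0.
  move=> x y hxy; apply/funext => u; apply/propext; split => // [[[_ h1] [_ h2]]].
  by move: hxy; rewrite -h1 -h2 eqxx.
have mP : forall x, mble (Pn adj o wp n x) := fun x => mPn o wp conn nbf_adj n x.
have cover : Bwn adj o wp n = \big[setU/set0]_(x <- s) Pn adj o wp n x.
  rewrite -bigcup_seq; apply/funext => u; apply/propext; split.
    move=> hu; exists (u o); last by split.
    by rewrite /= memS; apply/asboolP; apply: (Bwn_Sn adj_sym acyc hrm hrp hrmp).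
  by move=> [x _ [hu _]].
have mu1 : forall x, x \in s -> mu (Pn adj o wp n x) = 1%E.
  have hb : forall x, mu (Pn adj o wp n x) =
      (((`[< mu (Pn adj o wp n x) = 1%E >] : bool) : nat)%:R)%:E.
    move=> x; case: (mu_Pn adj_sym acyc conn nbf_adj hrp hmu n x) => h.
      rewrite h measure0; case: asboolP => //; by rewrite measure0.
    by rewrite h; case: asboolP.
  have := mu_pw mu us mP disj.
  rewrite -cover (mu_Bwn adj_sym acyc hrp hmu n).
  under eq_bigr do rewrite hb.
  rewrite sumEFin -GRing.natr_sum.
  move=> H; have H2 := EFin_inj H; move: H2 => /(@eqP _); rewrite eqr_nat sum_bool_count => /(@eqP _) hcnt.
  have hsz := Sn_size adj_sym acyc conn nbf_adj hrm hrp hrmp n.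
  have : all (fun x => `[< mu (Pn adj o wp n x) = 1%E >]) s.
    rewrite all_count eqn_leq count_size /=; by rewrite -hcnt.
  move=> /allP Hall x hx; exact/asboolP/Hall.
have hphi : forall x u, x \in s -> Pn adj o wp n x u ->
    onGM o wp f (g \o u) * cpow (q%:R : R) (((horo adj o (u o) wm)%:~R : R)%:C * expo s') = c x.
  move=> x u hx [[[hu [he _]] hxn] ux].
  rewrite (xptE adj_sym acyc hrp) in hxn.
  have [_ _ hh] := Bn_props adj_sym acyc hrm hrp hrmp hu he hxn.
  rewrite ux in hh; rewrite /c /onGM /= ux hh.
  congr (_ * cpow _ (_ * _)).
    apply: hf.1.
    - exact: (aut_ray hg (aut_ray hu hwp)).
    - exact: (aut_ray hg hwp).
    - exact: (ends_eq_map g he).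
  rewrite mulrNz pmulrn; apply/eqP; rewrite eq_complex /= oppr0 !eqxx. by [].
rewrite /Isn /cintegral cover /Rintegral.
rewrite (integral_pw mu us mP disj (c := fun x => complex.Re (c x))); last first.
  by move=> x u hx hu /=; rewrite (hphi x u hx hu).
rewrite (integral_pw mu us mP disj (c := fun x => complex.Im (c x))); last first.
  by move=> x u hx hu /=; rewrite (hphi x u hx hu).
have E : forall (h : X -> R), (\sum_(x <- s) ((h x)%:E * mu (Pn adj o wp n x)))%E =
    (\sum_(x <- s) h x)%:E.
  move=> h; rewrite -sumEFin big_seq [RHS]big_seq; apply: eq_bigr => x hx.
  by rewrite mu1 // mule1.
by rewrite !E /= sum_complex.
Qed.

Lemma main_0 g : is_aut adj g ->
  Isn adj mu q o wm wp s' 0 (onGM o wp f) g = onGM o wp f g.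
Proof.
move=> hg; rewrite main_n //.
have hoo : dist adj o o = 0%N.
  have := @dist_le _ adj (fun _ => o) 0 (fun i hi => False_ind _ (notF hi)).
  by rewrite leqn0 => /eqP.
have -> : [set x : X | horo adj o x wp = 0 /\ (dist adj x o <= 2 * 0)%N] = [set o].
  apply/funext => x; apply/propext; split.
    move=> [_]; rewrite muln0 leqn0 => /eqP h0.
    exact: (dist0 h0 (walk_exists conn x o)).
  move=> -> /=; split; first exact: (horo_oo adj_sym acyc hrp).
  by rewrite hoo.
rewrite fsbig_set1 hoo /onGM.
have -> : cpow (q%:R : R) (- ((0%N%:R : R))%:C * expo s') = 1.
  have -> : - ((0%N%:R : R))%:C = 0 :> R[i] by apply/eqP; rewrite eq_complex /= oppr0 !eqxx.
  rewrite mul0r /cpow /= !mul0r expR0 cos0 sin0 mulr1 mulr0.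
  by [].
by rewrite mulr1.
Qed.

End Final.

End Part8.
Import Part8.

Import GRing.Theory Num.Theory.
Local Open Scope classical_set_scope.
Local Open Scope ring_scope.
Local Open Scope complex_scope.

Theorem lemma5p5 (R : realType) (q : nat) (X : choiceType)
    (adj : X -> X -> Prop) (o : X) (wm wp : nat -> X)
    (mu : {measure set (AutM X) -> \bar R})
    (s' : R[i]) (f : X -> (nat -> X) -> R[i]) :
  (2 <= q)%N ->
  is_regular_tree adj q ->
  ray adj wm -> ray adj wp -> ~ ends_eq wm wp ->
  (exists rm rp, ray_to adj o wm rm /\ ray_to adj o wp rp /\
                 rm 1%N <> rp 1%N) ->
  haar_normalized adj q o wp mu ->
  lc_compact adj f ->
  (forall (n : nat) (g : X -> X), is_aut adj g ->
     Isn adj mu q o wm wp s' n (onGM o wp f) g =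
     \sum_(x \in [set x : X | horo adj o x wp = 0 /\
                             (dist adj x o <= 2 * n)%N])
        f (g x) (g \o wp) *
        cpow (q%:R : R) (- ((dist adj x o)%:R : R)%:C * expo s'))
  /\
  (forall g : X -> X, is_aut adj g ->
     Isn adj mu q o wm wp s' 0 (onGM o wp f) g = onGM o wp f g).
Proof.
move=> hq htree hwm hwp hne [rm [rp [hrm [hrp hrmp]]]] hmu hf.
case: htree => [adj_sym [_ [nbhd [conn acyc]]]].
case: (boolp.choice nbhd) => nbf hnbf.
have nbf_adj : forall x y, adj x y <-> exists i, nbf x i = y := fun x y => (hnbf x).2 y.
split.
- move=> n g hg.
  exact: (main_n s' adj_sym acyc conn nbf_adj hrm hrp hrmp hmu hwp hf n hg).
- move=> g hg.
  exact: (main_0 s' adj_sym acyc conn nbf_adj hrm hrp hrmp hmu hwp hf hg).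
Qed.
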